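(* Let $q$ be a prime power, $n\ge 2$, $\lambda$ a nontrivial additive character of $\mathbb{F}_q$, and $x\in\mathbb{F}_q^*$. Then \[ q^{\binom n2}\sum_{\alpha_1,\ldots,\alpha_{n-1}\in\mathbb{F}_q^*}\lambda\!\left(\alpha_1+\cdots+\alpha_{n-1}+\frac{x}{\alpha_1\cdots\alpha_{n-1}}\right) = \sum_{\substack{g\in GL(n,q)\\ \det g = x}}\lambda(\operatorname{tr} g). \]
   Context: $GL(n,q)$ is the group of invertible $n\times n$ matrices over $\mathbb{F}_q$. *)

(* Defs.v *)
From HB Require Import structures.
From mathcomp Require Import all_boot all_order all_algebra all_field.
Set Implicit Arguments. Unset Strict Implicit. Unset Printing Implicit Defensive.
Import GRing.Theory Num.Theory.
Local Open Scope ring_scope.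

Definition additive_char (F : finFieldType) (lam : F -> algC) : Prop :=
  lam 0 = 1 /\ forall a b : F, lam (a + b) = lam a * lam b.

Definition nontrivial_char (F : finFieldType) (lam : F -> algC) : Prop :=
  exists a : F, lam a != 1.

(* Main.v *)
Require Import Defs.
From HB Require Import structures.
From mathcomp Require Import all_boot all_order all_algebra all_field.
Import GRing.Theory Num.Theory.
Local Open Scope ring_scope.

Section Helpers.
Variables (F : finFieldType) (lam : F -> algC).
Hypothesis Hlam : additive_char lam.

Definition Ssum n (y : F) := \sum_(g : 'M[F]_n | \det g == y) lam (\tr g).

Lemma lamD a b : lam (a + b) = lam a * lam b.
Proof. by case: Hlam. Qed.

Lemma shift_zero n (ul : 'M[F]_1) (ur : 'M[F]_(1, n)) (y : F) :
  nontrivial_char lam -> ur != 0 ->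
  \sum_(p : 'M[F]_(n, 1) * 'M[F]_n | \det (block_mx ul ur p.1 p.2) == y)
     lam (\tr (block_mx ul ur p.1 p.2)) = 0.
Proof.
move=> [a0 Ha0] nz.
have [j Hj] : exists j, ur 0 j != 0.
  apply/existsP; apply: contraR nz => /existsPn H; apply/eqP/matrixP => i k.
  by rewrite ord1 mxE; move: (H k); rewrite negbK => /eqP.
set c := ur 0 j.
set C : 'M[F]_(n, 1) := (a0 / c) *: delta_mx j 0.
set S := (X in X = 0).
have HS : S = lam a0 * S.
  rewrite {1}/S (reindex_inj (h := fun p => (p.1 + C *m ul, p.2 + C *m ur))); last first.
    by move=> [? ?] [? ?] /= [/addIr -> /addIr ->].
  rewrite /S mulr_sumr; apply: eq_big => p /=.
    have -> : block_mx ul ur (p.1 + C *m ul) (p.2 + C *m ur) =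
      block_mx 1%:M 0 C 1%:M *m block_mx ul ur p.1 p.2.
      by rewrite mulmx_block !mul1mx !mul0mx !addr0 ![_ + C *m _]addrC.
    by rewrite det_mulmx det_lblock !det1 !mul1r.
  move=> _; rewrite !mxtrace_block mxtraceD addrA lamD [RHS]mulrC.
  have -> : \tr (C *m ur) = a0.
    rewrite -scalemxAl mxtraceZ mxtrace_mulC -colE.
    have -> : \tr (col j ur) = c by rewrite /mxtrace big_ord1 mxE.
    by rewrite divfK.
  by [].
have : (1 - lam a0) * S = 0 by rewrite mulrBl mul1r -HS subrr.
move/eqP; rewrite mulf_eq0 subr_eq0 eq_sym (negbTE Ha0) /=.
by move/eqP.
Qed.

Lemma Srec n y : y != 0 -> nontrivial_char lam ->
  Ssum n.+1 y = (#|F| ^ n)%:R * \sum_(a : F | a != 0) lam a * Ssum n (y / a).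
Proof.
move=> Hy Hnt; rewrite /Ssum.
pose h (p : ('M[F]_1 * 'M[F]_(1,n)) * ('M[F]_(n,1) * 'M[F]_n)) : 'M[F]_(1+n) :=
  block_mx p.1.1 p.1.2 p.2.1 p.2.2.
have E1 : \sum_(g : 'M[F]_(1+n) | \det g == y) lam (\tr g) =
  \sum_(ul : 'M[F]_1) \sum_(ur : 'M[F]_(1,n))
    \sum_(p : 'M[F]_(n, 1) * 'M[F]_n | \det (block_mx ul ur p.1 p.2) == y)
     lam (\tr (block_mx ul ur p.1 p.2)).
  rewrite pair_big pair_big_dep (reindex h); last first.
    apply: onW_bij.
    exists (fun g => ((ulsubmx g, ursubmx g), (dlsubmx g, drsubmx g))).
      by move=> [[? ?] [? ?]]; rewrite /h /= block_mxKul block_mxKur block_mxKdl block_mxKdr.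
    by move=> g; rewrite /h /= submxK.
  by apply: eq_big => [[[? ?] [? ?]]|[[? ?] [? ?]] _].
rewrite E1 {E1}.
have E2 : forall ul : 'M[F]_1, \sum_(ur : 'M[F]_(1,n))
    \sum_(p : 'M[F]_(n, 1) * 'M[F]_n | \det (block_mx ul ur p.1 p.2) == y)
     lam (\tr (block_mx ul ur p.1 p.2)) =
   (\sum_(d : 'M[F]_n | \det ul * \det d == y) lam (\tr ul + \tr d)) *+ (#|F| ^ n).
  move=> ul; rewrite (bigD1 0) //= [X in _ + X]big1 ?addr0; last first.
    move=> ur Hur; exact: shift_zero Hnt Hur.
  transitivity (\sum_(dl : 'M[F]_(n,1))
     \sum_(d : 'M[F]_n | \det ul * \det d == y) lam (\tr ul + \tr d)).
    rewrite pair_big_dep; apply: eq_big => [[? ?]|[? ?] _] /=;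
      by rewrite ?det_lblock ?mxtrace_block.
  by rewrite sumr_const card_mx muln1.
rewrite (eq_bigr _ (fun ul _ => E2 ul)) {E2}.
rewrite (reindex (fun a : F => a%:M)); last first.
  apply: onW_bij; exists (fun A : 'M[F]_1 => A 0 0).
    by move=> a; rewrite mxE eqxx mulr1n.
  by move=> A; apply/matrixP => i j; rewrite !ord1 mxE eqxx mulr1n.
rewrite (bigD1 0) //= big_pred0 ?mul0rn ?add0r; last first.
  by move=> d; rewrite det_scalar1 mul0r eq_sym (negbTE Hy).
rewrite mulr_sumr; apply: eq_bigr => a Ha.
rewrite -[LHS]mulr_natl natrX; congr (_ * _).
rewrite mulr_sumr; apply: eq_big => d.
  rewrite det_scalar1; apply/eqP/eqP => [<-|->]; first by rewrite [a * _]mulrC mulfK.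
  by rewrite mulrC divfK.
by move=> _; rewrite mxtrace_scalar mulr1n lamD.
Qed.

Definition Ksum m (y : F) :=
  \sum_(a : {ffun 'I_m -> F} | [forall i, a i != 0])
     lam (\sum_(i < m) a i + y / \prod_(i < m) a i).

Lemma Krec m y : Ksum m.+1 y = \sum_(b : F | b != 0) lam b * Ksum m (y / b).
Proof.
pose h (p : F * {ffun 'I_m -> F}) : {ffun 'I_m.+1 -> F} :=
  [ffun i => if unlift ord0 i is Some j then p.2 j else p.1].
rewrite /Ksum (reindex h); last first.
  apply: onW_bij; exists (fun a : {ffun 'I_m.+1 -> F} => (a ord0, [ffun j : 'I_m => a (lift ord0 j)])).
    move=> [b f]; rewrite /h /= ffunE unlift_none; congr pair.
    by apply/ffunP => j; rewrite !ffunE liftK.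
  move=> a; apply/ffunP => i; rewrite /h !ffunE.
  by case: unliftP => [j ->|->] //=; rewrite ffunE.
under [RHS]eq_bigr do rewrite mulr_sumr.
rewrite pair_big_dep; apply: eq_big => [[b f]|[b f] _] /=.
  apply/forallP/andP => [H|[H1 /forallP H2] i].
    split; first by move: (H ord0); rewrite ffunE unlift_none.
    by apply/forallP => j; move: (H (lift ord0 j)); rewrite ffunE liftK.
  by rewrite ffunE; case: unliftP => [j _|_].
have -> : \sum_(i < m.+1) h (b, f) i = b + \sum_(j < m) f j.
  rewrite big_ord_recl ffunE unlift_none; congr (_ + _).
  by apply: eq_bigr => j _; rewrite ffunE liftK.
have -> : \prod_(i < m.+1) h (b, f) i = b * \prod_(j < m) f j.
  rewrite big_ord_recl ffunE unlift_none; congr (_ * _).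
  by apply: eq_bigr => j _; rewrite ffunE liftK.
by rewrite -addrA lamD invfM mulrA.
Qed.

Lemma Ssum0 z : Ssum 0 z = (z == 1)%:R.
Proof.
rewrite /Ssum big_mkcond /= (eq_bigr (fun _ => (z == 1)%:R)).
  by rewrite sumr_const card_mx.
move=> g _; have -> : g = 1%:M by apply/matrixP => [[]].
rewrite det1 eq_sym; case: (z == 1) => //.
by rewrite mxtrace1; case: Hlam.
Qed.

Lemma Ksum0 y : Ksum 0 y = lam y.
Proof.
rewrite /Ksum (big_pred1 [ffun i => 0]).
  by rewrite !big_ord0 add0r divr1.
move=> a /=; have -> : [forall i, a i != 0] by apply/forallP => [[]].
by apply/esym/eqP/ffunP => [[]].
Qed.

Lemma mainG m y : nontrivial_char lam -> y != 0 ->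
  Ssum m.+1 y = (#|F| ^ 'C(m.+1, 2))%:R * Ksum m y.
Proof.
move=> Hnt; elim: m y => [|m IH] y Hy.
  rewrite Srec // Ksum0 (_ : 'C(1,2) = 0%N) // !expn0 !mul1r.
  rewrite (bigD1 y) //= Ssum0 divff // eqxx mulr1 big1 ?addr0 //.
  move=> a /andP [Ha Hay]; rewrite Ssum0.
  case: eqP => [E|]; last by rewrite mulr0.
  by move: Hay; rewrite -(divfK Ha y) E mul1r eqxx.
rewrite Srec // Krec binS bin1 addnC expnD natrM -mulrA; congr (_ * _).
rewrite mulr_sumr; apply: eq_bigr => a Ha.
by rewrite IH ?mulf_neq0 ?invr_eq0 // mulrCA.
Qed.
End Helpers.

Theorem mainTheorem5 (F : finFieldType) (n : nat) (lam : F -> algC) (x : F) :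
  (2 <= n)%N -> additive_char lam -> nontrivial_char lam -> x != 0 ->
  ((#|F| ^ 'C(n, 2))%N)%:R *
    \sum_(a : {ffun 'I_n.-1 -> F} | [forall i, a i != 0])
       lam (\sum_(i < n.-1) a i + x / \prod_(i < n.-1) a i)
  = \sum_(g : 'M[F]_n | \det g == x) lam (\tr g).
Proof.
move=> Hn Hlam Hnt Hx.
case: n Hn => [|[|m]] // _.
by have := (@mainG F lam Hlam m.+1 x Hnt Hx); rewrite /Ssum /Ksum => ->.
Qed.
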